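(* Let $K$ be a field, $A=K[X_1,\ldots,X_m]$ with $m\ge2$, and let $N,k\in\mathbb{N}$ and $q=p^e$ for a prime $p$ and $e\ge0$. Let $J=(X_1^N+X_2^N+\cdots+X_m^N,\ (X_2^q,X_3^q,\ldots,X_m^q)^k)$. If $>$ denotes the graded reverse lexicographic order with $X_1>X_2>\cdots>X_m$, then $$\mathrm{in}_>(J)=(X_1^N,\ (X_2^q,X_3^q,\ldots,X_m^q)^k).$$
   Context: $\mathrm{in}_>(J)$ denotes the initial ideal of $J$, generated by leading monomials of elements of $J$ with respect to $>$. *)

(* Defs.v *)
From HB Require Import structures.
From mathcomp Require Import all_boot all_order all_algebra.
From mathcomp Require Import mpoly.
Set Implicit Arguments. Unset Strict Implicit. Unset Printing Implicit Defensive.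
Import GRing.Theory.
Local Open Scope ring_scope.

Section Ideals.
Variables (R : comRingType) (n : nat).
Local Notation P := {mpoly R[n]}.

Definition ideal_gen (S : P -> Prop) : P -> Prop :=
  fun p => exists l : seq (P * P),
    (forall x, x \in l -> S x.2) /\ p = \sum_(x <- l) x.1 * x.2.

Definition ideal_sum (I J : P -> Prop) : P -> Prop :=
  ideal_gen (fun p => I p \/ J p).
Definition ideal_mul (I J : P -> Prop) : P -> Prop :=
  ideal_gen (fun p => exists a b, I a /\ J b /\ p = a * b).
Definition ideal_pow (I : P -> Prop) (k : nat) : P -> Prop :=
  iter k (ideal_mul I) (ideal_gen (fun p => p = 1)).

(* graded reverse lexicographic order with X_0 > X_1 > ... > X_{n-1}:
   grevlex_lt a b  <->  a < b *)
Definition grevlex_lt (a b : 'X_{1..n}) : Prop :=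
  (mdeg a < mdeg b)%N \/
  (mdeg a = mdeg b /\
   exists i : 'I_n, (b i < a i)%N /\ forall j : 'I_n, (i < j)%N -> a j = b j).

Definition is_lead_mon (f : P) (t : 'X_{1..n}) : Prop :=
  t \in msupp f /\ forall s, s \in msupp f -> s != t -> grevlex_lt s t.

Definition initial_ideal (J : P -> Prop) : P -> Prop :=
  ideal_gen (fun g => exists f t, J f /\ f != 0 /\ is_lead_mon f t /\ g = 'X_[t]).

End Ideals.

(* Main.v *)
Require Import Defs.
From HB Require Import structures.
From mathcomp Require Import all_boot all_order all_algebra.
From mathcomp Require Import mpoly.
Import GRing.Theory.
From mathcomp Require Import zify.
Local Open Scope ring_scope.
Set Implicit Arguments. Unset Strict Implicit.
Section Gen.
Variables (R : comRingType) (n : nat).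
Local Notation P := {mpoly R[n]}.

Definition is_ideal (I : P -> Prop) :=
  [/\ I 0, (forall p q, I p -> I q -> I (p + q)) & (forall r p, I p -> I (r * p))].

Lemma ideal0 I : is_ideal I -> I 0. Proof. by case. Qed.
Lemma idealD I p q : is_ideal I -> I p -> I q -> I (p + q). Proof. by case=> _ h _; apply: h. Qed.
Lemma idealM I r p : is_ideal I -> I p -> I (r * p). Proof. by case=> _ _ h; apply: h. Qed.

Lemma ideal_big I (T : Type) (s : seq T) (Q : pred T) (F : T -> P) :
  is_ideal I -> (forall i, Q i -> I (F i)) -> I (\sum_(i <- s | Q i) F i).
Proof.
move=> hI hF; elim: s => [|x s IH]; first by rewrite big_nil; apply: ideal0.
rewrite big_cons; case: ifP => // hx; apply: idealD => //; exact: hF.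
Qed.

Lemma ig_ideal (S : P -> Prop) : is_ideal (ideal_gen S).
Proof.
split.
- by exists [::]; split => //; rewrite big_nil.
- move=> p q [l1 [h1 ->]] [l2 [h2 ->]]; exists (l1 ++ l2); split; last by rewrite big_cat.
  move=> x; rewrite mem_cat => /orP [hx|hx]; [exact: h1 | exact: h2].
- move=> r p [l [h ->]]; exists [seq (r * x.1, x.2) | x <- l]; split.
  + by move=> x /mapP [y yl ->] /=; apply: h.
  + by rewrite big_map mulr_sumr; apply: eq_bigr => x _; rewrite mulrA.
Qed.

Lemma ig_gen (S : P -> Prop) g : S g -> ideal_gen S g.
Proof.
move=> Sg; exists [:: (1, g)]; split; last by rewrite big_seq1 mul1r.
by move=> x; rewrite inE => /eqP ->.
Qed.

Lemma ig_min (I S : P -> Prop) : is_ideal I -> (forall g, S g -> I g) ->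
  forall p, ideal_gen S p -> I p.
Proof.
move=> hI hS p [l [hl ->]]; rewrite -(big_filter _ predT).
elim: l hl => [|x l IH] hl; first by rewrite big_nil; apply: ideal0.
rewrite /= big_cons; apply: idealD => //; first by apply: idealM => //; apply/hS/hl; rewrite inE eqxx.
by apply: IH => y hy; apply: hl; rewrite inE hy orbT.
Qed.

Definition MI (Q : pred 'X_{1..n}) : P -> Prop := fun g => forall t, t \in msupp g -> Q t.

Lemma MI_ideal (Q : pred _) : (forall t u, Q t -> Q (u + t)%MM) -> is_ideal (MI Q).
Proof.
move=> hQ; split.
- by move=> t; rewrite mcoeff_msupp mcoeff0 eqxx.
- move=> p q hp hq t /msuppD_le; rewrite mem_cat => /orP [ht|ht]; [exact: hp | exact: hq].
- move=> r p hp t /msuppM_le /allpairsP [[u v] [/= hu hv ->]]; apply: hQ; exact: hp.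
Qed.

Lemma MI_monos (Q : pred _) g : MI Q g -> ideal_gen (fun h => exists t, Q t /\ h = 'X_[t]) g.
Proof.
move=> hg; rewrite (mpolyE g); apply: ideal_big; first exact: ig_ideal.
move=> t _; rewrite -mul_mpolyC.
case: (boolP (t \in msupp g)) => ht.
  by apply: idealM; [exact: ig_ideal| apply: ig_gen; exists t; split => //; apply: hg].
move: ht; rewrite -mcoeff_eq0 => /eqP ->; rewrite mul0r; apply: ideal0; exact: ig_ideal.
Qed.

Lemma nz_of_supp (f : P) t : t \in msupp f -> f != 0.
Proof. by move=> h; apply/eqP => f0; move: h; rewrite f0 mcoeff_msupp mcoeff0 eqxx. Qed.

Local Notation lt := (@grevlex_lt n).

Lemma glt_irr a : ~ lt a a.
Proof. by case=> [h|[_ [i [h _]]]]; rewrite ltnn in h. Qed.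

Lemma glt_add a b c : lt a b -> lt (a + c)%MM (b + c)%MM.
Proof.
case=> [h|[h [i [h1 h2]]]]; first by left; rewrite !mdegD ltn_add2r.
right; split; first by rewrite !mdegD h.
exists i; split; first by rewrite !mnmDE ltn_add2r.
by move=> j /h2; rewrite !mnmDE => ->.
Qed.

Lemma glt_add_l a b c : lt a b -> lt (c + a)%MM (c + b)%MM.
Proof. by move=> h; rewrite ![(c + _)%MM]addmC; apply: glt_add. Qed.

Lemma glt_trans a b c : lt a b -> lt b c -> lt a c.
Proof.
case=> [h1|[e1 [i [hi1 hi2]]]] [h2|[e2 [i' [hi1' hi2']]]].
- by left; exact: ltn_trans h1 h2.
- by left; rewrite -e2.
- by left; rewrite e1.
right; split; first by rewrite e1.
case: (ltngtP i i') => [lt1|gt1|eq1].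
- exists i'; split; first by rewrite hi2.
  by move=> j hj; rewrite hi2 ?hi2' //; exact: ltn_trans lt1 hj.
- exists i; split; first by rewrite -hi2'.
  by move=> j hj; rewrite hi2 ?hi2' //; exact: ltn_trans gt1 hj.
- have ei : i = i' by apply: val_inj.
  subst i'; exists i; split; first exact: ltn_trans hi1' hi1.
  by move=> j hj; rewrite hi2 ?hi2'.
Qed.

Lemma glt_total a b : a != b -> lt a b \/ lt b a.
Proof.
move=> neq; case: (ltngtP (mdeg a) (mdeg b)) => [h|h|h]; [by left; left|by right; left|].
have [j hj] : exists j, a j != b j.
  apply/existsP; apply: contraNT neq; rewrite negb_exists => /forallP H.
  by apply/eqP/mnmP => i; apply/eqP; move: (H i); rewrite negbK.
case: (@arg_maxnP _ j (fun l => a l != b l) (fun l : 'I_n => val l) hj) => i hi hmax.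
have E : forall l : 'I_n, (i < l)%N -> a l = b l.
  by move=> l hl; apply/eqP; apply/negPn/negP => /hmax /=; rewrite leqNgt hl.
case: (ltngtP (a i) (b i)) => [c|c|c].
- by right; right; split => //; exists i; split => // l /E.
- by left; right; split => //; exists i; split => // l /E.
- by move: hi; rewrite c eqxx.
Qed.

Lemma seq_max (s : seq 'X_{1..n}) : s != [::] ->
  exists2 x, x \in s & forall y, y \in s -> y = x \/ lt y x.
Proof.
elim: s => // y s IH _; case: (eqVneq s [::]) => [->|ne].
  exists y; first by rewrite inE.
  by move=> z; rewrite inE => /eqP ->; left.
have [x xs H] := IH ne; case: (eqVneq y x) => [->|nyx].
  exists x; first by rewrite inE xs orbT.
  by move=> z; rewrite inE => /orP[/eqP->|/H]; [left|].
case: (glt_total nyx) => h.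
  exists x; first by rewrite inE xs orbT.
  by move=> z; rewrite inE => /orP[/eqP->|/H //]; right.
exists y; first by rewrite inE eqxx.
move=> z; rewrite inE => /orP[/eqP->|/H [->|hz]]; [by left|by right|].
by right; exact: glt_trans hz h.
Qed.

Lemma gle_add u s v w : (u = s \/ lt u s) -> (v = w \/ lt v w) ->
  (u + v)%MM = (s + w)%MM \/ lt (u + v)%MM (s + w)%MM.
Proof.
case=> [->|h1] [->|h2]; [by left|right|right|right].
- exact: glt_add_l.
- exact: glt_add.
- exact: glt_trans (glt_add _ h1) (glt_add_l _ h2).
Qed.

End Gen.
Section Main.
Variables (K : fieldType) (n N q k : nat) (hN : (0 < N)%N) (hq : (0 < q)%N)
  (i0 : 'I_n) (hi0 : val i0 = 0%N).
Local Notation P := {mpoly K[n]}.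
Local Notation lt := (@grevlex_lt n).

Definition Iq : P -> Prop :=
  ideal_gen (fun g => exists i : 'I_n, (0 < val i)%N /\ g = 'X_i ^+ q).
Definition Pow := ideal_pow Iq.

Definition good (k : nat) (t : 'X_{1..n}) : bool :=
  (k <= \sum_(i < n | (0 < val i)%N) t i %/ q)%N.

Lemma good_add a b u v : good a u -> good b v -> good (a + b) (u + v)%MM.
Proof.
rewrite /good => h1 h2; apply: leq_trans (leq_add h1 h2) _.
rewrite -big_split /=; apply: leq_sum => i _; rewrite mnmDE divnD //; exact: leq_addr.
Qed.

Lemma good0 t : good 0 t. Proof. by []. Qed.

Lemma good_up a t u : good a t -> good a (u + t)%MM.
Proof. by move=> h; have := good_add (good0 u) h. Qed.

Lemma pow_ideal j : is_ideal (Pow j).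
Proof. by case: j => [|j]; apply: ig_ideal. Qed.

Lemma Iq_MI g : Iq g -> MI (good 1) g.
Proof.
apply: ig_min; first exact: (MI_ideal K (@good_up 1)).
move=> h [i [hi ->]] t; rewrite mpolyXn msuppX inE => /eqP ->.
rewrite /good (bigD1 i) //= mulmnE mnm1E eqxx mul1n divnn hq; exact: leq_addr.
Qed.

Lemma pow_MI j g : Pow j g -> MI (good j) g.
Proof.
elim: j g => [|j IH] g; first by move=> _ t _; exact: good0.
move=> hg; apply: (ig_min (MI_ideal K (@good_up j.+1)) _ hg).
move=> h [a [b [ha [hb ->]]]] t /msuppM_le /allpairsP [[u v] [/= hu hv ->]].
by have := good_add (Iq_MI ha hu) (IH b hb v hv); rewrite add1n.
Qed.

Lemma mnm_split (t : 'X_{1..n}) (i : 'I_n) c : (c <= t i)%N ->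
  t = (U_(i) *+ c + (t - U_(i) *+ c))%MM.
Proof.
move=> h; apply/mnmP => j; rewrite mnmDE mnmBE mulmnE mnm1E.
case: (eqVneq i j) => [<-|_] /=; first by rewrite mul1n subnKC.
by rewrite mul0n subn0.
Qed.

Lemma mono_pow j t : good j t -> Pow j 'X_[t].
Proof.
elim: j t => [|j IH] t ht.
  exists [:: ('X_[t], 1)]; split; last by rewrite big_seq1 mulr1.
  by move=> x; rewrite inE => /eqP ->.
have [i /andP [hi hti]] : exists i : 'I_n, (0 < val i)%N && (q <= t i)%N.
  case: (boolP [exists i : 'I_n, (0 < val i)%N && (q <= t i)%N]) => [/existsP //|].
  rewrite negb_exists => /forallP H; exfalso; move: ht; rewrite /good big1 //.
  move=> l hl; have := H l; rewrite hl /= -ltnNge => hlt; exact: divn_small.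
set t' := (t - U_(i) *+ q)%MM.
have et := mnm_split hti; rewrite -/t' in et.
rewrite et mpolyXD -mpolyXn; apply: ig_gen; exists ('X_i ^+ q), 'X_[t'].
split; first by apply: ig_gen; exists i.
split => //; apply: IH.
have E l : (U_(i) *+ q + t')%MM l = ((i == l) * q + t' l)%N.
  by rewrite mnmDE mulmnE mnm1E.
move: ht; rewrite /good et.
under eq_bigr do rewrite E.
rewrite (bigD1 i) //= eqxx mul1n -{1}[q]mul1n divnMDl //.
rewrite [X in (_ < _ + X)%N -> _](eq_bigr (fun l => (t' l %/ q)%N)).
  by rewrite [X in _ -> (_ <= X)%N](bigD1 i) //=; lia.
by move=> l /andP [_ hl]; rewrite eq_sym (negbTE hl) mul0n.
Qed.

Lemma MI_pow j g : MI (good j) g -> Pow j g.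
Proof.
move/MI_monos => h; apply: (ig_min (pow_ideal j) _ h) => x [t [ht ->]].
exact: mono_pow.
Qed.

Definition F : P := \sum_(i < n) 'X_i ^+ N.
Definition m0 : 'X_{1..n} := (U_(i0) *+ N)%MM.

Lemma mj_lt (j : 'I_n) : j != i0 -> lt (U_(j) *+ N)%MM m0.
Proof.
move=> hj; right; split; first by rewrite /m0 !mdegMn !mdeg1.
exists j; rewrite /m0 !mulmnE !mnm1E eqxx mul1n; split.
  by rewrite eq_sym (negbTE hj) mul0n.
move=> l hl; rewrite !mulmnE !mnm1E.
have -> : (j == l) = false by apply/negbTE; apply: contraTneq hl => ->; rewrite ltnn.
have -> // : (i0 == l) = false.
apply/negbTE; apply: contraTneq hl => <-; by rewrite hi0.
Qed.

Lemma F_coef s : F@_s = \sum_(i < n) ((U_(i) *+ N)%MM == s)%:R.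
Proof. by rewrite /F raddf_sum; apply: eq_bigr => i _ /=; rewrite mpolyXn mcoeffX. Qed.

Lemma m0_F : m0 \in msupp F.
Proof.
rewrite mcoeff_msupp F_coef (bigD1 i0) //= eqxx big1 ?addr0 ?oner_neq0 //.
move=> j hj; case: eqP => // E; exfalso.
have := mj_lt hj; rewrite E; exact: (@glt_irr n).
Qed.

Lemma F_supp v : v \in msupp F -> v = m0 \/ lt v m0.
Proof.
rewrite mcoeff_msupp F_coef => hv.
have [j /eqP <-] : exists j : 'I_n, (U_(j) *+ N)%MM == v.
  apply/existsP; apply: contraNT hv; rewrite negb_exists => /forallP H.
  by rewrite big1 // => j _; rewrite (negbTE (H j)).
case: (eqVneq j i0) => [->|hj]; [by left | right; exact: mj_lt].
Qed.

Lemma F_lead : is_lead_mon F m0.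
Proof.
split; first exact: m0_F.
by move=> s /F_supp [->|//]; rewrite eqxx.
Qed.

Definition J := ideal_sum (ideal_gen (fun g => g = \sum_(i < n) 'X_i ^+ N)) (Pow k).
Definition RHS := ideal_sum
  (ideal_gen (fun g => exists i : 'I_n, val i = 0%N /\ g = 'X_i ^+ N)) (Pow k).

Lemma easy g : RHS g -> initial_ideal J g.
Proof.
apply: ig_min; first exact: ig_ideal.
move=> h [hh|hh].
  apply: (ig_min (ig_ideal _) _ hh) => x [i [hi ->]].
  have -> : i = i0 by apply: val_inj; rewrite hi hi0.
  apply: ig_gen; exists F, m0; split.
    by apply: ig_gen; left; apply: ig_gen.
  split; first exact: nz_of_supp m0_F.
  by split; [exact: F_lead | rewrite mpolyXn].
move/pow_MI/MI_monos: hh => hh.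
apply: (ig_min (ig_ideal _) _ hh) => x [t [ht ->]].
apply: ig_gen; exists 'X_[t], t; split; first by apply: ig_gen; right; apply: mono_pow.
have tX : t \in msupp (('X_[t]) : P) by rewrite msuppX inE.
split; first exact: nz_of_supp tX.
split => //; split => // s; rewrite msuppX inE => /eqP ->; by rewrite eqxx.
Qed.

Definition Jf : P -> Prop := fun f => exists a b, f = a * F + b /\ MI (good k) b.

Lemma Jf_ideal : is_ideal Jf.
Proof.
have hMI := MI_ideal K (@good_up k).
split.
- exists 0, 0; split; first by rewrite mul0r addr0.
  exact: ideal0 hMI.
- move=> f g [a1 [b1 [-> h1]]] [a2 [b2 [-> h2]]]; exists (a1 + a2), (b1 + b2).
  split; first by rewrite mulrDl addrACA.
  exact: (idealD hMI h1 h2).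
- move=> r f [a [b [-> h]]]; exists (r * a), (r * b).
  split; first by rewrite mulrDr mulrA.
  exact: (idealM r hMI h).
Qed.

Lemma J_form f : J f -> Jf f.
Proof.
apply: ig_min; first exact: Jf_ideal.
move=> g [hg|hg].
  apply: (ig_min Jf_ideal _ hg) => x ->; exists 1, 0.
  split; first by rewrite mul1r addr0.
  exact: ideal0 (MI_ideal K (@good_up k)).
exists 0, g; split; first by rewrite mul0r add0r.
exact: pow_MI.
Qed.

Lemma RHS_mono (t : 'X_{1..n}) : (N <= t i0)%N || good k t -> RHS 'X_[t].
Proof.
case/orP => ht; last by apply: ig_gen; right; apply: mono_pow.
rewrite (mnm_split ht) mpolyXD mulrC -mpolyXn.
apply: idealM; first exact: ig_ideal.
apply: ig_gen; left; apply: ig_gen; by exists i0.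
Qed.

Lemma main_lead (f : P) (t : 'X_{1..n}) : Jf f -> is_lead_mon f t -> (N <= t i0)%N || good k t.
Proof.
move=> [a [b [ef hb]]] [ht1 ht2].
have hMI := MI_ideal K (@good_up k).
set an := \sum_(u <- msupp a | ~~ good k u) a@_u *: ('X_[u] : P).
set ag := \sum_(u <- msupp a | good k u) a@_u *: ('X_[u] : P).
have ea : a = ag + an by rewrite {1}(mpolyE a) (bigID (good k)) /=.
have hag : MI (good k) ag.
  apply: (ideal_big _ hMI) => u hu; rewrite -mul_mpolyC; apply: (idealM _ hMI) => s.
  by rewrite msuppX inE => /eqP ->.
have han : forall u, u \in msupp an -> ~~ good k u.
  move=> u /msupp_sum_le /flattenP [l /mapP [v]]; rewrite mem_filter => /andP [hv _] ->.
  by move/msuppZ_le; rewrite msuppX inE => /eqP ->.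
set b' := ag * F + b.
have hb' : MI (good k) b' by apply: (idealD hMI) => //; rewrite mulrC; apply: (idealM _ hMI).
have ef' : f = an * F + b' by rewrite ef ea mulrDl -addrA addrCA.
case: (eqVneq an 0) => [an0|an_nz].
  by apply/orP; right; apply: hb'; move: ht1; rewrite ef' an0 mul0r add0r.
have nz : msupp an != [::] by rewrite msupp_eq0.
have [s hs smax] := @seq_max n (msupp an) nz.
set w := (m0 + s)%MM.
have Fcoef : (an * F)@_w = an@_s.
  rewrite /F mulr_sumr raddf_sum (bigD1 i0) //= big1 ?addr0.
    by rewrite mpolyXn mcoeffMX.
  move=> j hj /=; rewrite mpolyXn; apply/eqP; rewrite mcoeff_eq0.
  rewrite (perm_mem (msuppMX _ _)); apply/mapP => [[u hu ew]].
  suff : lt (U_(j) *+ N + u)%MM w by rewrite -ew; exact: (@glt_irr n).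
  rewrite /w; case: (smax u hu) => [->|hus]; first exact: glt_add (mj_lt hj).
  exact: glt_trans (glt_add_l _ hus) (glt_add _ (mj_lt hj)).
have gws : good k w = good k s.
  rewrite /good; congr (_ <= _)%N; apply: eq_bigr => i hi.
  rewrite mnmDE /m0 mulmnE mnm1E.
  have -> : (i0 == i) = false by apply/negbTE; apply: contraTneq hi => <-; rewrite hi0.
  by rewrite mul0n.
have bw : b'@_w = 0.
  apply/eqP; rewrite mcoeff_eq0; apply/negP => /hb'.
  by rewrite gws; apply/negP; apply: han.
have wf : w \in msupp f.
  by rewrite mcoeff_msupp ef' mcoeffD Fcoef bw addr0 -mcoeff_msupp.
case: (boolP (t \in msupp b')) => [/hb' -> |tb]; first by rewrite orbT.
have tF : t \in msupp (an * F).
  by move: ht1; rewrite ef' => /msuppD_le; rewrite mem_cat (negbTE tb) orbF.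
case: (eqVneq w t) => [<-|wt].
  by rewrite /w mnmDE /m0 mulmnE mnm1E eqxx mul1n leq_addr.
have lwt := ht2 w wf wt.
move: tF => /msuppM_le /allpairsP [[u v] [/= hu hv et]].
have := gle_add (smax u hu) (F_supp hv).
rewrite -et /w addmC; case=> [E|ltw].
  by move: wt; rewrite E eqxx.
by exfalso; exact: (@glt_irr n _ (glt_trans lwt ltw)).
Qed.

Lemma hard g : initial_ideal J g -> RHS g.
Proof.
apply: ig_min; first exact: ig_ideal.
move=> x [f [t [hf [_ [hl ->]]]]]; apply: RHS_mono.
exact: main_lead (J_form hf) hl.
Qed.
End Main.

Theorem lemma5p1 (K : fieldType) (m : nat) (hm : (2 <= m)%N)
    (N k p e : nat) (hN : (0 < N)%N) (hp : prime p) :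
  let q := (p ^ e)%N in
  let Iq : {mpoly K[m]} -> Prop :=
    ideal_gen (fun g => exists i : 'I_m, (0 < val i)%N /\ g = 'X_i ^+ q) in
  let J := ideal_sum
             (ideal_gen (fun g => g = \sum_(i < m) 'X_i ^+ N))
             (ideal_pow Iq k) in
  let RHS := ideal_sum
               (ideal_gen (fun g => exists i : 'I_m, val i = 0%N /\ g = 'X_i ^+ N))
               (ideal_pow Iq k) in
  forall g : {mpoly K[m]}, initial_ideal J g <-> RHS g.
Proof.
move=> q Iq0 J0 RHS0 g.
have hq : (0 < q)%N by rewrite expn_gt0 prime_gt0.
have hm0 : (0 < m)%N by apply: leq_trans hm.
split.
- exact: (@hard K m N q k hN hq (Ordinal hm0) erefl g).
- exact: (@easy K m N q k hN hq (Ordinal hm0) erefl g).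
Qed.
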